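(* Let $m,n\ge r\ge1$ and let $A\in\mathbb{R}^{m\times r}$, $B\in\mathbb{R}^{n\times r}$ be arbitrary. Then $$\left|\|AB^\top\|_*-\|A\|_F^2\right|\le\sqrt{\|A^\top A-B^\top B\|_*}\;\|A\|_*,$$ and in particular $$\left|\|AB^\top\|_*-\frac{\|A\|_F^2+\|B\|_F^2}{2}\right|\le\sqrt{\|A^\top A-B^\top B\|_*}\;\frac{\|A\|_*+\|B\|_*}{2}.$$
   Context: $\|\cdot\|_F$ is the Frobenius norm and $\|X\|_*=\operatorname{Tr}(\sqrt{XX^\top})$ the nuclear norm (sum of singular values). *)

(* Defs.v *)
From HB Require Import structures.
From mathcomp Require Import all_boot all_order all_algebra.
From mathcomp Require Import boolp classical_sets reals.
Set Implicit Arguments. Unset Strict Implicit. Unset Printing Implicit Defensive.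
Import Order.TTheory GRing.Theory Num.Theory.
Local Open Scope ring_scope.

Definition psd (R : realType) (k : nat) (M : 'M[R]_k) : Prop :=
  M^T = M /\ forall v : 'cV[R]_k, 0 <= (v^T *m M *m v) 0 0.

(* the (principal) PSD square root of a PSD matrix M: the PSD S with S*S = M.
   (Chosen by classical choice; unique when M is PSD.) *)
Definition psd_sqrt (R : realType) (k : nat) (M : 'M[R]_k) : 'M[R]_k :=
  xget 0 [set S : 'M[R]_k | psd S /\ S *m S = M].

Definition nuc (R : realType) (p q : nat) (X : 'M[R]_(p, q)) : R :=
  \tr (psd_sqrt (X *m X^T)).

Definition frob (R : realType) (p q : nat) (X : 'M[R]_(p, q)) : R :=
  Num.sqrt (\sum_(i < p) \sum_(j < q) X i j ^+ 2).

(* Main.v *)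
Require Import Defs.
From HB Require Import structures.
From mathcomp Require Import all_boot all_order all_algebra.
From mathcomp Require Import boolp classical_sets reals.
From mathcomp Require Import sesquilinear spectral.
From mathcomp.real_closed Require Import complex.
From mathcomp Require Import ring lra.
Import Order.TTheory GRing.Theory Num.Theory.
Set Implicit Arguments. Unset Strict Implicit. Unset Printing Implicit Defensive.
Local Open Scope ring_scope.
Definition dot (R : realType) k (x y : 'cV[R]_k) : R := \sum_i x i 0 * y i 0.
Arguments dot {R k}.

Lemma dotE (R : realType) k (x y : 'cV[R]_k) : (x^T *m y) 0 0 = dot x y.
Proof. by rewrite mxE; apply: eq_bigr => i _; rewrite mxE. Qed.

Lemma dot_ge0 (R : realType) k (x : 'cV[R]_k) : 0 <= dot x x.
Proof. by apply: sumr_ge0 => i _; rewrite -expr2 sqr_ge0. Qed.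

Lemma dot_eq0 (R : realType) k (x : 'cV[R]_k) : dot x x = 0 -> x = 0.
Proof.
move=> /eqP; rewrite psumr_eq0; last by move=> i _; rewrite -expr2 sqr_ge0.
move=> /allP H; apply/matrixP => i j; rewrite ord1 mxE.
by have := H i (mem_index_enum _); rewrite -expr2 sqrf_eq0 => /eqP.
Qed.

Lemma dotC (R : realType) k (x y : 'cV[R]_k) : dot x y = dot y x.
Proof. by apply: eq_bigr => i _; rewrite mulrC. Qed.

Lemma dotBl (R : realType) k (x y z : 'cV[R]_k) : dot (x - y) z = dot x z - dot y z.
Proof. by rewrite /dot -sumrB; apply: eq_bigr => i _; rewrite !mxE mulrBl. Qed.

Lemma dotDl (R : realType) k (x y z : 'cV[R]_k) : dot (x + y) z = dot x z + dot y z.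
Proof. by rewrite /dot -big_split; apply: eq_bigr => i _; rewrite !mxE mulrDl. Qed.

Lemma dotZl (R : realType) k a (x z : 'cV[R]_k) : dot (a *: x) z = a * dot x z.
Proof. by rewrite /dot mulr_sumr; apply: eq_bigr => i _; rewrite !mxE mulrA. Qed.

Lemma dotBr (R : realType) k (x y z : 'cV[R]_k) : dot z (x - y) = dot z x - dot z y.
Proof. by rewrite dotC dotBl !(dotC z). Qed.
Lemma dotDr (R : realType) k (x y z : 'cV[R]_k) : dot z (x + y) = dot z x + dot z y.
Proof. by rewrite dotC dotDl !(dotC z). Qed.
Lemma dotZr (R : realType) k a (x z : 'cV[R]_k) : dot z (a *: x) = a * dot z x.
Proof. by rewrite dotC dotZl dotC. Qed.

Lemma dot0l (R : realType) k (x : 'cV[R]_k) : dot 0 x = 0.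
Proof. by rewrite /dot big1 // => i _; rewrite mxE mul0r. Qed.
Lemma dot0r (R : realType) k (x : 'cV[R]_k) : dot x 0 = 0.
Proof. by rewrite /dot big1 // => i _; rewrite mxE mulr0. Qed.

Lemma dotNl (R : realType) k (x z : 'cV[R]_k) : dot (- x) z = - dot x z.
Proof. by rewrite -scaleN1r dotZl mulN1r. Qed.

Lemma dote0 (R : realType) k (x : 'cV[R]_k.+1) : dot x (delta_mx 0 0) = x 0 0.
Proof.
rewrite /dot (bigD1 0) //= big1 => [|i /negbTE ni]; rewrite !mxE ?ni /= ?eqxx ?mulr1 ?addr0 //.
by rewrite mulr0.
Qed.

Lemma householder (R : realType) n (u : 'cV[R]_n.+1) :
  dot u u = 1 ->
  exists H : 'M[R]_n.+1, [/\ H^T = H, H *m H = 1%:M & H *m delta_mx 0 0 = u].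
Proof.
move=> u1.
set e : 'cV[R]_n.+1 := delta_mx 0 0.
set w := e - u.
set t := dot w w.
set c := 2 / t.
exists (1%:M - c *: (w *m w^T)); split.
- by rewrite linearB /= linearZ /= trmx_mul trmxK trmx1.
- have ww : w *m w^T *m (w *m w^T) = t *: (w *m w^T).
    by rewrite mulmxA -(mulmxA w) [w^T *m w]mx11_scalar mul_mx_scalar
      -scalemxAl dotE.
  rewrite mulmxBl !mulmxBr !mul1mx !mulmx1 -!scalemxAl -!scalemxAr ww scalerA.
  have k : c * (c * t) = c + c.
    rewrite /c; have [->|tn0] := eqVneq t 0; first by rewrite !mulr0 invr0 mulr0 addr0.
    by field.
  by rewrite !scalerA -mulrA k scalerDl opprB addrK subrK.
- have ee : dot e e = 1 by rewrite dote0 mxE.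
  have eu : dot w e = 1 - u 0 0 by rewrite dotBl !dote0 mxE.
  have tE : t = 2 - 2 * u 0 0.
    by rewrite /t /w !(dotBl, dotBr) ee u1 !dote0 (dotC e) dote0; ring.
  rewrite mulmxBl mul1mx -scalemxAl -mulmxA [w^T *m e]mx11_scalar dotE eu.
  rewrite mul_mx_scalar scalerA.
  have [t0|tn0] := eqVneq t 0.
    have w0 : w = 0 by apply: dot_eq0.
    rewrite w0 scaler0 subr0; apply/eqP; rewrite -subr_eq0; apply/eqP.
    exact: w0.
  have -> : c * (1 - u 0 0) = 1 by rewrite /c tE; field; move: tn0; rewrite tE.
  by rewrite scale1r /w opprB addrC subrK.
Qed.

Lemma real_eigen (R : realType) (n : nat) (M : 'M[R]_n.+1) :
  M^T = M -> exists a : R, exists2 v : 'rV[R]_n.+1, v *m M = a *: v & v != 0.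
Proof.
move=> Msym.
pose f := real_complex R.
pose A := map_mx f M.
have Asym : A \is symmetricmx.
  by rewrite is_hermitianmxE expr0 scale1r map_mx_id // /A map_trmx Msym.
have Areal : A \is a realmx.
  apply/mxOverP => i j; rewrite /A mxE; apply/Creal_ReP.
  by rewrite -complexRe.
have Aherm := realsym_hermsym Asym Areal.
have /hermitian_normalmx /orthomx_spectralP Aeq := Aherm.
have dreal := hermitian_spectral_diag_real Aherm.
set P := spectralmx A in Aeq; set d := spectral_diag A in Aeq dreal.
have ev : eigenvalue A (d 0 0).
  have Pu := spectral_unit A.
  apply/eigenvalueP; exists (row 0 P).
    rewrite -row_mul Aeq !mulmxA mulmxV // mul1mx row_mul row_diag_mx.
    by rewrite -scalemxAl -rowE.
  apply/negP => /eqP r0.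
  have := congr1 (fun X => X *m invmx P) r0.
  rewrite -row_mul mulmxV // mul0mx => /rowP /(_ 0).
  by rewrite !mxE eqxx /= => /eqP; rewrite oner_eq0.
have dr : d 0 0 = f (complex.Re (d 0 0)).
  by rewrite /f complexRe; apply/esym/Creal_ReP; move/mxOverP: dreal; apply.
exists (complex.Re (d 0 0)).
apply/eigenvalueP.
rewrite eigenvalue_root_char -(fmorph_root f) map_char_poly.
by move: ev; rewrite eigenvalue_root_char {1}dr.
Qed.

Lemma spectral_real (R : realType) n (M : 'M[R]_n) : M^T = M ->
  exists O : 'M[R]_n, exists d : 'rV[R]_n,
    O^T *m O = 1%:M /\ M = O *m diag_mx d *m O^T.
Proof.
elim: n M => [|n IH] M Msym.
  exists 1%:M, 0; split; first by rewrite trmx1 mulmx1.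
  by apply/matrixP => [[]].
have [a [v vM vn0]] := real_eigen Msym.
set x := v^T.
have Mx : M *m x = a *: x by rewrite /x -{1}Msym -trmx_mul vM linearZ.
have xn0 : dot x x != 0.
  apply/negP => /eqP /dot_eq0 x0; move: vn0; rewrite -(trmxK v) -/x x0.
  by rewrite trmx0 eqxx.
have xpos : 0 < dot x x by rewrite lt0r xn0 dot_ge0.
set u := (Num.sqrt (dot x x))^-1 *: x.
have u1 : dot u u = 1.
  rewrite /u dotZl dotZr mulrA -expr2 exprVn sqr_sqrtr ?dot_ge0 //.
  by rewrite mulVf.
have Mu : M *m u = a *: u by rewrite /u -scalemxAr Mx !scalerA mulrC.
have [H [HT HH He]] := householder u1.
set e : 'cV[R]_n.+1 := delta_mx 0 0.
have Hu : H *m u = e by rewrite -He mulmxA HH mul1mx.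
set M' := H *m M *m H.
have M'T : M'^T = M' by rewrite /M' !trmx_mul HT Msym mulmxA.
have M'e : M' *m e = a *: e by rewrite /M' -!mulmxA He Mu -scalemxAr Hu.
have M'col : forall i j : 'I_n.+1, val j = 0%N -> M' i j = a * (i == 0)%:R.
  move=> i j j0; have -> : j = 0 by apply/val_inj.
  have := congr1 (fun X : 'cV[R]_n.+1 => X i 0) M'e.
  rewrite -colE !mxE => ->; by rewrite eqxx andbT.
pose M1 : 'M_(1 + n) := M'.
have dl0 : dlsubmx M1 = 0.
  apply/matrixP => i j; rewrite ord1 [RHS]mxE mxE mxE /M1.
  by rewrite M'col //; case: eqP => [/(congr1 val)//|]; rewrite mulr0.
have ur0 : ursubmx M1 = 0.
  by rewrite -[M1]trmxK -trmx_dlsub /M1 M'T dl0 trmx0.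
have ul : ulsubmx M1 = a%:M.
  apply/matrixP => i j; rewrite !ord1 [RHS]mxE mxE mxE /M1 /=.
  rewrite M'col //; case: eqP => [_|/(_ (val_inj _))//]; by rewrite mulr1.
have M1sym : (drsubmx M1)^T = drsubmx M1 by rewrite trmx_drsub /M1 M'T.
have [O1 [d1 [O1O M1E]]] := IH _ M1sym.
have M1blk : M1 = block_mx a%:M 0 0 (O1 *m diag_mx d1 *m O1^T).
  by rewrite -M1E -ul -ur0 -dl0 submxK.
exists (H *m (block_mx 1%:M 0 0 O1 : 'M_(1 + n))), (row_mx (a%:M : 'rV_1) d1 : 'rV_(1 + n)); split.
  rewrite trmx_mul (@tr_block_mx _ 1 n 1 n) !trmx0 trmx1 HT -mulmxA (mulmxA H) HH mul1mx.
  rewrite (@mulmx_block _ 1 n 1 n 1 n) !(mulmx0, mul0mx, addr0, add0r, mulmx1, mul1mx) O1O.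
  by rewrite -scalar_mx_block.
have -> : M = H *m M1 *m H.
  by rewrite /M1 /M' !mulmxA HH mul1mx -mulmxA HH mulmx1.
rewrite M1blk (@diag_mx_row _ n 1) trmx_mul (@tr_block_mx _ 1 n 1 n) !trmx0 trmx1 HT.
rewrite !mulmxA; congr (_ *m _); rewrite -!mulmxA; congr (_ *m _).
rewrite !(@mulmx_block _ 1 n 1 n 1 n) !(mulmx0, mul0mx, addr0, add0r, mulmx1, mul1mx).
have -> : diag_mx (a%:M : 'rV_1) = a%:M by apply/matrixP => i j; rewrite !ord1 !mxE.
by [].
Qed.

Definition dg (R : realType) k (f : 'I_k -> R) : 'M[R]_k := diag_mx (\row_i f i).

Lemma dgE (R : realType) k (f : 'I_k -> R) i j : dg f i j = f i *+ (i == j).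
Proof. by rewrite /dg !mxE. Qed.

Lemma dg_mul (R : realType) k (f g : 'I_k -> R) :
  dg f *m dg g = dg (fun i => f i * g i).
Proof.
apply/matrixP => i j; rewrite /dg mul_diag_mx !mxE.
by case: eqVneq => [->|]; rewrite ?mulr1n ?mulr0n ?mulr0.
Qed.

Lemma dg_tr (R : realType) k (f : 'I_k -> R) : (dg f)^T = dg f.
Proof. by rewrite /dg tr_diag_mx. Qed.

Lemma orthC (R : realType) k (O : 'M[R]_k) : O^T *m O = 1%:M -> O *m O^T = 1%:M.
Proof. by move/mulmx1C. Qed.

Lemma odg_mul (R : realType) k (O : 'M[R]_k) f g : O^T *m O = 1%:M ->
  (O *m dg f *m O^T) *m (O *m dg g *m O^T) = O *m dg (fun i => f i * g i) *m O^T.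
Proof.
move=> OO; rewrite !mulmxA -(mulmxA _ O^T O) OO mulmx1 -(mulmxA _ (dg f)) dg_mul.
by [].
Qed.

Lemma odg_tr (R : realType) k (O : 'M[R]_k) f : (O *m dg f *m O^T)^T = O *m dg f *m O^T.
Proof. by rewrite !trmx_mul trmxK dg_tr mulmxA. Qed.

Lemma odg_trace (R : realType) k (O : 'M[R]_k) f : O^T *m O = 1%:M ->
  \tr (O *m dg f *m O^T) = \sum_i f i.
Proof.
move=> OO; rewrite mxtrace_mulC mulmxA OO mul1mx /dg mxtrace_diag.
by apply: eq_bigr => i _; rewrite mxE.
Qed.

Lemma dot_mulmx (R : realType) p q (A : 'M[R]_(p, q)) x y :
  dot x (A *m y) = dot (A^T *m x) y.
Proof. by rewrite -!dotE trmx_mul trmxK mulmxA. Qed.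

Lemma dot_orth (R : realType) k (O : 'M[R]_k) v : O^T *m O = 1%:M ->
  dot (O^T *m v) (O^T *m v) = dot v v.
Proof. by move=> /orthC OO; rewrite -dot_mulmx mulmxA OO mul1mx. Qed.

Lemma dot_dg (R : realType) k (f : 'I_k -> R) y :
  dot y (dg f *m y) = \sum_i f i * y i 0 ^+ 2.
Proof.
apply: eq_bigr => i _; rewrite /dg mul_diag_mx !mxE; by rewrite mulrCA expr2.
Qed.

Lemma odg_qf (R : realType) k (O : 'M[R]_k) f v :
  dot v (O *m dg f *m O^T *m v) = \sum_i f i * (O^T *m v) i 0 ^+ 2.
Proof. by rewrite -!mulmxA dot_mulmx dot_dg. Qed.

Lemma psdE (R : realType) k (M : 'M[R]_k) v : (v^T *m M *m v) 0 0 = dot v (M *m v).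
Proof. by rewrite -mulmxA dotE. Qed.

Lemma psdP (R : realType) k (M : 'M[R]_k) :
  psd M <-> M^T = M /\ forall v, 0 <= dot v (M *m v).
Proof.
split=> [[MT Mv]|[MT Mv]]; split => // v; [by rewrite -psdE | by rewrite psdE].
Qed.

Lemma odg_psd (R : realType) k (O : 'M[R]_k) f : (forall i, 0 <= f i) ->
  psd (O *m dg f *m O^T).
Proof.
move=> f0; apply/psdP; split; first exact: odg_tr.
move=> v; rewrite odg_qf; apply: sumr_ge0 => i _; apply: mulr_ge0 => //.
exact: sqr_ge0.
Qed.

Lemma delta_entry (R : realType) p q (M : 'M[R]_(p, q)) i j :
  ((delta_mx 0 i : 'M_(1, p)) *m M *m (delta_mx j 0 : 'M_(q, 1))) 0 0 = M i j.
Proof. by rewrite -rowE -colE !mxE. Qed.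

Lemma dot_col (R : realType) p q r (A : 'M[R]_(p, q)) (K : 'M[R]_p) (B : 'M[R]_(p, r)) i j :
  dot (col i A) (K *m col j B) = (A^T *m K *m B) i j.
Proof.
by rewrite -dotE !colE trmx_mul trmx_delta -(delta_entry (A^T *m K *m B)) !mulmxA.
Qed.

Lemma colO_unit (R : realType) k (O : 'M[R]_k) i : O^T *m O = 1%:M ->
  dot (col i O) (col i O) = 1.
Proof.
move=> OO; rewrite -{2}[col i O]mul1mx dot_col mulmx1 OO mxE.
by case: eqP.
Qed.

Lemma colO_eig (R : realType) k (O : 'M[R]_k) f j : O^T *m O = 1%:M ->
  O *m dg f *m O^T *m col j O = f j *: col j O.
Proof.
move=> OO; rewrite colE -!mulmxA (mulmxA O^T) OO mul1mx.
have -> : dg f *m (delta_mx j 0 : 'cV_k) = f j *: (delta_mx j 0 : 'cV_k).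
  apply/matrixP => a b; rewrite /dg mul_diag_mx !mxE.
  by case: eqP => [->|]; rewrite ?mulr1 ?mulr0.
by rewrite -scalemxAr.
Qed.

Lemma spectral_dg (R : realType) k (M : 'M[R]_k) : M^T = M ->
  exists O : 'M[R]_k, exists f : 'I_k -> R,
    O^T *m O = 1%:M /\ M = O *m dg f *m O^T.
Proof.
move=> /spectral_real [O [d [OO ->]]]; exists O, (fun i => d 0 i); split => //.
by congr (_ *m _ *m _); congr diag_mx; apply/matrixP => i j; rewrite ord1 mxE.
Qed.

Lemma spectral_psd (R : realType) k (M : 'M[R]_k) : psd M ->
  exists O : 'M[R]_k, exists f : 'I_k -> R,
    [/\ O^T *m O = 1%:M, forall i, 0 <= f i & M = O *m dg f *m O^T].
Proof.
move=> /psdP [MT Mv]; have [O [f [OO ME]]] := spectral_dg MT.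
exists O, f; split => // i.
have := Mv (col i O); rewrite ME colO_eig // dotZr colO_unit //.
by rewrite mulr1.
Qed.

Lemma sqrt_exists (R : realType) k (M : 'M[R]_k) : psd M ->
  exists S, psd S /\ S *m S = M.
Proof.
move=> /spectral_psd [O [f [OO f0 ->]]].
exists (O *m dg (fun i => Num.sqrt (f i)) *m O^T); split.
  by apply: odg_psd => i; apply: sqrtr_ge0.
rewrite odg_mul //; congr (_ *m _ *m _); congr dg; apply: funext => i.
by rewrite -expr2 sqr_sqrtr.
Qed.

Lemma col_mulmx (R : realType) p q r (A : 'M[R]_(p, q)) (B : 'M[R]_(q, r)) j :
  col j (A *m B) = A *m col j B.
Proof. by rewrite !colE mulmxA. Qed.

Lemma sqrt_unique (R : realType) k (S T : 'M[R]_k) :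
  psd S -> psd T -> S *m S = T *m T -> S = T.
Proof.
move=> PS PT SST.
have [ST Sv] := (psdP S).1 PS.
have [O [t [OO t0 TE]]] := spectral_psd PT.
suff colE' : forall j, S *m col j O = T *m col j O.
  have SO : S *m O = T *m O.
    apply/matrixP => a b; move: (colE' b); rewrite -!col_mulmx.
    by move=> /(congr1 (fun X : 'cV[R]_k => X a 0)); rewrite !mxE.
  by rewrite -[S]mulmx1 -[T]mulmx1 -(orthC OO) !mulmxA SO.
move=> j; set f := col j O; set tau := t j.
have Tf : T *m f = tau *: f by rewrite TE colO_eig.
have TTf : T *m (T *m f) = tau ^+ 2 *: f by rewrite Tf -scalemxAr Tf scalerA.
have [tau0|taupos] := eqVneq tau 0.
  have SSf : S *m (S *m f) = 0 by rewrite mulmxA SST -mulmxA TTf tau0 expr0n scale0r.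
  have : dot (S *m f) (S *m f) = 0 by rewrite dot_mulmx ST SSf dot0l.
  by move/dot_eq0 => ->; rewrite Tf tau0 scale0r.
have taugt : 0 < tau by rewrite lt0r taupos t0.
set g := S *m f - tau *: f.
have Sg : S *m g + tau *: g = 0.
  rewrite /g mulmxBr -scalemxAr scalerBr mulmxA SST -mulmxA TTf scalerA -expr2.
  by rewrite addrA subrK subrr.
have : dot g (S *m g) + tau * dot g g = 0 by rewrite -dotZr -dotDr Sg dot0r.
have h1 := Sv g; have h2 := dot_ge0 g.
move=> h3.
have gg : dot g g = 0.
  apply/eqP; rewrite eq_le h2 andbT.
  rewrite -(@pmulr_rle0 _ tau) //; lra.
have := dot_eq0 gg; rewrite /g => /eqP; rewrite subr_eq0 => /eqP ->.
by rewrite Tf.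
Qed.

Lemma psd_sqrt_eq (R : realType) k (M S : 'M[R]_k) :
  psd S -> S *m S = M -> psd_sqrt M = S.
Proof.
move=> PS SM; rewrite /psd_sqrt; apply: xget_unique; first by split.
by move=> T [PT TM]; apply: sqrt_unique => //; rewrite TM.
Qed.

Lemma psd_sqrtP (R : realType) k (M : 'M[R]_k) :
  psd M -> psd (psd_sqrt M) /\ psd_sqrt M *m psd_sqrt M = M.
Proof.
move=> /sqrt_exists [S [PS SM]]; rewrite (psd_sqrt_eq PS SM); by split.
Qed.

Lemma dot_self (R : realType) k (y : 'cV[R]_k) : dot y y = \sum_i y i 0 ^+ 2.
Proof. by apply: eq_bigr => i _; rewrite expr2. Qed.

Lemma psd_gram (R : realType) p q (Y : 'M[R]_(p, q)) : psd (Y^T *m Y).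
Proof.
apply/psdP; split; first by rewrite trmx_mul trmxK.
by move=> v; rewrite -mulmxA dot_mulmx trmxK dot_ge0.
Qed.

Lemma gram_eq0 (R : realType) p q (K : 'M[R]_(p, q)) : K^T *m K = 0 -> K = 0.
Proof.
move=> KK; apply/matrixP => a b.
have : dot (col b K) (1%:M *m col b K) = 0 by rewrite dot_col mulmx1 KK mxE.
rewrite mul1mx => /dot_eq0 /(congr1 (fun X : 'cV[R]_p => X a 0)).
by rewrite !mxE.
Qed.

Lemma dg_sub1 (R : realType) k (c : 'I_k -> R) :
  dg (fun i => 1 - c i) = 1%:M - dg c.
Proof.
apply/matrixP => i j; rewrite !mxE; case: eqP => _; rewrite ?mulr1n ?mulr0n //.
by rewrite subr0.
Qed.

Lemma polar (R : realType) p q (Y : 'M[R]_(p, q)) :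
  exists W : 'M[R]_(p, q),
    [/\ W *m psd_sqrt (Y^T *m Y) = Y, W^T *m Y = psd_sqrt (Y^T *m Y)
      & forall e, dot (W *m e) (W *m e) <= dot e e].
Proof.
have [PS SS] := psd_sqrtP (psd_gram Y).
set S := psd_sqrt _ in PS SS *.
have [O [s [OO s0 SE0]]] := spectral_psd PS.
have SE : S = O *m dg s *m O^T := SE0.
set Sp := O *m dg (fun i => (s i)^-1) *m O^T.
have SpT : Sp^T = Sp by rewrite odg_tr.
exists (Y *m Sp); split.
- set c := fun i => 1 - (s i)^-1 * s i.
  set K := Y *m O *m dg c.
  have K0 : K = 0.
    apply: gram_eq0; rewrite /K !trmx_mul dg_tr -!mulmxA (mulmxA Y^T) -SS SE.
    rewrite (odg_mul s s OO) !mulmxA -(mulmxA (dg c) O^T O) OO mulmx1.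
    rewrite -(mulmxA _ O^T O) OO mulmx1 !dg_mul.
    apply/matrixP => i j; rewrite dgE mxE /c.
    have [->|sn0] := eqVneq (s i) 0; first by rewrite !mulr0 mul0r mul0rn.
    by rewrite mulVf // subrr !mul0r mul0rn.
  rewrite -mulmxA SE /Sp odg_mul //.
  have -> : (fun i => (s i)^-1 * s i) = (fun i => 1 - c i).
    by apply: funext => i; rewrite /c opprB addrC subrK.
  rewrite dg_sub1 !mulmxA mulmxBr mulmx1 -/K K0 subr0 -mulmxA orthC //.
  by rewrite mulmx1.
- rewrite trmx_mul SpT -mulmxA -SS SE /Sp !odg_mul //.
  congr (_ *m _ *m _); congr dg; apply: funext => i.
  have [->|sn0] := eqVneq (s i) 0; first by rewrite !mulr0.
  by rewrite mulrA mulVf // mul1r.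
- move=> e; rewrite dot_mulmx dotC trmx_mul SpT !mulmxA -(mulmxA Sp Y^T Y) -SS SE /Sp.
  rewrite !odg_mul // -(mulmxA _ O^T O) OO mulmx1 -(mulmxA O) dg_mul odg_qf.
  rewrite -(dot_orth e OO) dot_self; apply: ler_sum => i _.
  rewrite -[X in _ <= X]mul1r; apply: ler_wpM2r; first exact: sqr_ge0.
  have [->|sn0] := eqVneq (s i) 0; first by rewrite !mulr0 mul0r.
  by rewrite mulrA mulVf // mul1r mulfV.
Qed.

Lemma nuc_tr (R : realType) p q (Y : 'M[R]_(p, q)) :
  \tr (psd_sqrt (Y *m Y^T)) = \tr (psd_sqrt (Y^T *m Y)).
Proof.
have [PS SS] := psd_sqrtP (psd_gram Y).
have [ST _] := (psdP _).1 PS.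
have [W [WS WY _]] := polar Y.
set S := psd_sqrt _ in PS SS ST WS WY *.
have WWS : W^T *m W *m S = S by rewrite -mulmxA WS WY.
have PZ : psd (W *m S *m W^T).
  apply/psdP; split; first by rewrite !trmx_mul trmxK ST mulmxA.
  move=> v; rewrite -!mulmxA dot_mulmx.
  by have [_ Sv] := (psdP _).1 PS; apply: Sv.
rewrite (@psd_sqrt_eq _ _ _ (W *m S *m W^T)) //.
  by rewrite mxtrace_mulC mulmxA mxtrace_mulC mulmxA -mulmxA mxtrace_mulC WWS.
rewrite -!mulmxA (mulmxA W^T) (mulmxA (W^T *m W)) WWS !mulmxA WS.
rewrite -mulmxA; congr (_ *m _); by rewrite -{1}ST -trmx_mul WS.
Qed.

Lemma psd_tr_ge0 (R : realType) k (S : 'M[R]_k) : psd S -> 0 <= \tr S.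
Proof.
move=> /spectral_psd [O [f [OO f0 ->]]]; rewrite odg_trace //.
by apply: sumr_ge0 => i _.
Qed.

Lemma nuc_ge0 (R : realType) p q (X : 'M[R]_(p, q)) : 0 <= nuc X.
Proof.
rewrite /nuc; apply: psd_tr_ge0.
by have [] := psd_sqrtP (psd_gram X^T); rewrite trmxK.
Qed.

Lemma CS (R : realType) k (x y : 'cV[R]_k) : dot x y ^+ 2 <= dot x x * dot y y.
Proof.
have [x0|xn0] := eqVneq (dot x x) 0.
  by rewrite (dot_eq0 x0) !dot0l; lra.
have bpos : 0 < dot x x by rewrite lt0r xn0 dot_ge0.
have := dot_ge0 (dot x x *: y - dot x y *: x).
rewrite !(dotBl, dotBr, dotZl, dotZr) (dotC y x) => h.
have : 0 <= dot x x * (dot x x * dot y y - dot x y ^+ 2) by nra.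
by rewrite pmulr_rge0 // subr_ge0.
Qed.

Lemma sq_le (R : realType) (a s : R) : 0 <= s -> a ^+ 2 <= s ^+ 2 -> a <= s.
Proof. move=> s0 h; nra. Qed.

Lemma sum_le1 (R : realType) k (g : 'I_k -> R) i :
  \sum_j g j ^+ 2 = 1 -> g i ^+ 2 <= 1.
Proof.
move=> <-; rewrite (bigD1 i) //= lerDl; apply: sumr_ge0 => j _; exact: sqr_ge0.
Qed.

Lemma K1 (R : realType) k (M : 'M[R]_k) f : M^T = M -> dot f f = 1 ->
  `| dot f (M *m f) | <= nuc M.
Proof.
move=> MT f1; have [O [d [OO ME]]] := spectral_dg MT.
have -> : nuc M = \sum_i `|d i|.
  rewrite /nuc (@psd_sqrt_eq _ _ _ (O *m dg (fun i => `|d i|) *m O^T)).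
  - by rewrite odg_trace.
  - by apply: odg_psd => i.
  - rewrite odg_mul // MT {2}ME ME odg_mul //; congr (_ *m _ *m _); congr dg.
    by apply: funext => i; rewrite -normrM ger0_norm // -expr2 sqr_ge0.
have g1 : \sum_i (O^T *m f) i 0 ^+ 2 = 1 by rewrite -dot_self dot_orth.
rewrite ME odg_qf; apply: (le_trans (ler_norm_sum _ _ _)); apply: ler_sum => i _.
rewrite normrM (ger0_norm (sqr_ge0 _)).
rewrite -[X in _ <= X]mulr1; apply: ler_wpM2l => //.
exact: (@sum_le1 _ _ (fun j => (O^T *m f) j 0)).
Qed.

Lemma G (R : realType) k (K O : 'M[R]_k) (x : 'I_k -> R) c :
  O^T *m O = 1%:M -> (forall i, 0 <= x i) ->
  (forall e, dot e e = 1 -> dot e (K *m e) <= c) ->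
  \tr (K *m (O *m dg x *m O^T)) <= c * \sum_i x i.
Proof.
move=> OO x0 Kc.
rewrite !mulmxA mxtrace_mulC !mulmxA /mxtrace mulr_sumr; apply: ler_sum => i _.
rewrite /dg mul_mx_diag mxE [X in _ * X]mxE -dot_col.
by apply: ler_wpM2r => //; apply: Kc; apply: colO_unit.
Qed.

Lemma K2 (R : realType) k (X Rr : 'M[R]_k) : psd X -> psd Rr ->
  forall e, dot ((X - Rr) *m e) ((X - Rr) *m e) <= nuc (X *m X - Rr *m Rr) * dot e e.
Proof.
move=> PX PR; have [XT Xv] := (psdP X).1 PX; have [RT Rv] := (psdP Rr).1 PR.
set N := X - Rr.
have NT : N^T = N by rewrite /N linearB /= XT RT.
set D := X *m X - Rr *m Rr.
have DT : D^T = D by rewrite /D linearB /= !trmx_mul XT RT.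
have [O [l [OO NE]]] := spectral_dg NT.
have lam : forall j, l j ^+ 2 <= nuc D.
  move=> j; set f := col j O.
  have f1 : dot f f = 1 := colO_unit j OO.
  have Nf : N *m f = l j *: f by rewrite NE colO_eig.
  set a := dot f (X *m f); set b := dot f (Rr *m f).
  have a0 : 0 <= a := Xv f.
  have b0 : 0 <= b := Rv f.
  have la : l j = a - b.
    have : dot f (N *m f) = l j by rewrite Nf dotZr f1 mulr1.
    by rewrite /N mulmxBl dotBr.
  have DE : D = N *m X + Rr *m N by rewrite /D /N mulmxBl mulmxBr addrA subrK.
  have PQ : dot f (D *m f) = l j * (a + b).
    rewrite DE mulmxDl dotDr -!mulmxA (dot_mulmx N) NT Nf dotZl -/a.
    by rewrite -scalemxAr dotZr -/b mulrDr.
  have := K1 DT f1; rewrite PQ la => h.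
  move: h; rewrite ler_norml => /andP [h1 h2].
  have [ab|ab] := lerP b a; nra.
move=> e; rewrite dot_mulmx NT mulmxA NE odg_mul // dotC odg_qf.
rewrite -(dot_orth e OO) dot_self mulr_sumr; apply: ler_sum => i _.
by apply: ler_wpM2r; [exact: sqr_ge0 | rewrite -expr2; exact: lam].
Qed.

Lemma sq_le_abs (R : realType) (a s : R) : 0 <= s -> a ^+ 2 <= s ^+ 2 -> `|a| <= s.
Proof. move=> s0 h; rewrite ler_norml; apply/andP; split; nra. Qed.

Lemma core (R : realType) m n r (A : 'M[R]_(m, r)) (B : 'M[R]_(n, r)) :
  `| nuc (A *m B^T) - frob A ^+ 2 |
    <= Num.sqrt (nuc (A^T *m A - B^T *m B)) * nuc A.
Proof.
have [PX XX] := psd_sqrtP (psd_gram A).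
have [PR RR] := psd_sqrtP (psd_gram B).
set X := psd_sqrt (A^T *m A) in PX XX *.
set Rr := psd_sqrt (B^T *m B) in PR RR *.
have [XT _] := (psdP _).1 PX; have [RT _] := (psdP _).1 PR.
set Y := Rr *m X.
have h1 : nuc (A *m B^T) = \tr (psd_sqrt (Y^T *m Y)).
  rewrite /nuc.
  have -> : A *m B^T *m (A *m B^T)^T = (A *m Rr) *m (A *m Rr)^T.
    by rewrite !trmx_mul trmxK RT !mulmxA -(mulmxA A Rr Rr) RR !mulmxA.
  rewrite nuc_tr.
  have -> : (A *m Rr)^T *m (A *m Rr) = Rr *m (A^T *m A) *m Rr by rewrite trmx_mul RT !mulmxA.
  rewrite -XX.
  have -> : Rr *m (X *m X) *m Rr = Y *m Y^T by rewrite /Y trmx_mul XT RT !mulmxA.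
  by rewrite nuc_tr.
have h2 : frob A ^+ 2 = \tr (X *m X).
  rewrite /frob sqr_sqrtr; last first.
    by apply: sumr_ge0 => i _; apply: sumr_ge0 => j _; exact: sqr_ge0.
  rewrite XX /mxtrace exchange_big; apply: eq_bigr => j _; rewrite mxE.
  by apply: eq_bigr => i _; rewrite mxE expr2.
have h3 : nuc A = \tr X by rewrite /nuc nuc_tr.
set s := Num.sqrt _.
have s0 : 0 <= s by apply: sqrtr_ge0.
have ss : s ^+ 2 = nuc (A^T *m A - B^T *m B) by rewrite sqr_sqrtr // nuc_ge0.
set N := X - Rr.
have Nb : forall e, dot e e = 1 -> dot (N *m e) (N *m e) <= s ^+ 2.
  by move=> e e1; have := K2 PX PR e; rewrite XX RR e1 mulr1 -ss.
have [W [WS WY Wc]] := polar Y.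
have [PS _] := psd_sqrtP (psd_gram Y).
set S := psd_sqrt (Y^T *m Y) in PS WS WY h1 *.
have [O [x [OO x0 XE]]] := spectral_psd PX.
have [O2 [sg [OO2 sg0 SE]]] := spectral_psd PS.
have trX : \tr X = \sum_i x i by rewrite XE odg_trace.
have XXE : X *m X = O *m dg (fun i => x i * x i) *m O^T by rewrite XE odg_mul.
have trXX : \tr (X *m X) = \sum_i (x i * x i) by rewrite XXE odg_trace.
have trS : \tr S = \sum_i sg i by rewrite SE odg_trace.
have RrE : Rr = X - N by rewrite /N opprB addrC subrK.
have b1 : \tr Y <= \tr S.
  rewrite -WS trS.
  have := @G _ _ W O2 sg 1 OO2 sg0; rewrite -SE mul1r; apply => e e1.
  apply: sq_le => //; rewrite expr1n; apply: (le_trans (CS _ _)).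
  by rewrite e1 mul1r; have := Wc e; rewrite e1.
have b2 : \tr (N *m X) <= s * \tr X.
  rewrite trX {1}XE; apply: G => // e e1.
  apply: sq_le => //; apply: (le_trans (CS _ _)); rewrite e1 mul1r; exact: Nb.
have b3 : \tr Y = \tr (X *m X) - \tr (N *m X).
  by rewrite /Y RrE mulmxBl linearB.
have a1 : \tr S = \tr (W^T *m (X *m X)) + \tr ((- (W^T *m N)) *m X).
  rewrite -WY /Y RrE mulmxBl mulmxBr linearB /= mulNmx linearN /= mulmxA.
  by rewrite mulmxA.
have a2 : \tr (W^T *m (X *m X)) <= \tr (X *m X).
  rewrite trXX -[X in _ <= X]mul1r XXE; apply: G => //.
    by move=> i; apply: mulr_ge0.
  move=> e e1; apply: sq_le => //; rewrite expr1n dot_mulmx trmxK dotC.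
  apply: (le_trans (CS _ _)); rewrite e1 mul1r; have := Wc e; rewrite e1 //.
have a3 : \tr ((- (W^T *m N)) *m X) <= s * \tr X.
  rewrite trX {1}XE; apply: G => // e e1.
  rewrite mulNmx dotC dotNl -mulmxA dotC dot_mulmx trmxK.
  apply: sq_le => //; rewrite sqrrN; apply: (le_trans (CS _ _)).
  rewrite -[s ^+ 2]mul1r; apply: ler_pM => //; try exact: dot_ge0.
    by have := Wc e; rewrite e1.
  exact: Nb.
rewrite h1 h2 h3 ler_norml; apply/andP; split; lra.
Qed.

Lemma nucT (R : realType) p q (X : 'M[R]_(p, q)) : nuc X^T = nuc X.
Proof. by rewrite /nuc trmxK nuc_tr. Qed.

Lemma nucN (R : realType) p q (X : 'M[R]_(p, q)) : nuc (- X) = nuc X.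
Proof. by rewrite /nuc linearN /= mulNmx mulmxN opprK. Qed.

Unset Implicit Arguments.

Theorem proposition3 (R : realType) (m n r : nat)
  (hr : (1 <= r)%N) (hm : (r <= m)%N) (hn : (r <= n)%N)
  (A : 'M[R]_(m, r)) (B : 'M[R]_(n, r)) :
  `| nuc (A *m B^T) - frob A ^+ 2 |
    <= Num.sqrt (nuc (A^T *m A - B^T *m B)) * nuc A
  /\
  `| nuc (A *m B^T) - (frob A ^+ 2 + frob B ^+ 2) / 2 |
    <= Num.sqrt (nuc (A^T *m A - B^T *m B)) * ((nuc A + nuc B) / 2).
Proof.
have c1 := core A B; split => //.
have c2 := core B A.
have e1 : B *m A^T = (A *m B^T)^T by rewrite trmx_mul trmxK.
have e2 : B^T *m B - A^T *m A = - (A^T *m A - B^T *m B) by rewrite opprB.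
rewrite e1 nucT e2 nucN in c2.
move: c1 c2; set s := Num.sqrt _; set N := nuc _; set fa := frob A ^+ 2.
set fb := frob B ^+ 2; set a := nuc A; set b := nuc B.
rewrite !ler_norml => /andP [h1 h2] /andP [h3 h4].
apply/andP; split; lra.
Qed.
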